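(* Let $q$ be a prime power, $m\ge 1$, and let $L=\{\alpha_1,\dots,\alpha_n\}\subseteq GF(q^m)\setminus\{0\}$. Then the $q$-ary Goppa code $\Gamma(L,G)$ with $G(x)=x^{q}$ is equivalent to the $q$-ary Goppa code $\Gamma(L,G^{*})$ with $G^{*}(x)=x^{q-1}$.
   Context: For a set $L=\{\alpha_1,\dots,\alpha_n\}$ of distinct elements of $GF(q^m)$ and a polynomial $G\in GF(q^m)[x]$ with $G(\alpha_k)\neq 0$ for all $k$, the $q$-ary Goppa code is $\Gamma(L,G)=\{c\in GF(q)^n:\ \sum_{k=1}^n \frac{c_k}{x-\alpha_k}\equiv 0 \pmod{G(x)}\}$; equivalently, $c\in GF(q)^n$ lies in $\Gamma(L,G)$ iff $\sum_k c_k\,\alpha_k^s/G(\alpha_k)=0$ for $s=0,1,\dots,\deg G-1$. Two codes of length $n$ are equivalent if one is obtained from the other by a permutation of coordinates. *)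

(* Defs.v *)
From HB Require Import structures.
From mathcomp Require Import all_boot all_order all_algebra all_fingroup all_field.
Set Implicit Arguments. Unset Strict Implicit. Unset Printing Implicit Defensive.
Import GRing.Theory.
Local Open Scope ring_scope.

(* GF(q) is the finite field K, GF(q^m) is a (finite-dimensional, hence finite)
   field extension F of K; q = #|K|, m = \dim {:F}. *)

(* q-ary Goppa code Gamma(L,G), L = (alpha_1..alpha_n), via the parity-check
   characterization: sum_k c_k alpha_k^s / G(alpha_k) = 0 for s = 0..deg G - 1. *)
Definition goppa_code (K : finFieldType) (F : fieldExtType K) (n : nat)
    (alpha : 'I_n -> F) (G : {poly F}) : {set 'rV[K]_n} :=
  [set c : 'rV[K]_n | [forall s : 'I_(size G).-1,
      \sum_(k < n) ((c 0 k)%:A * alpha k ^+ s / G.[alpha k]) == 0]].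

Definition codes_equiv (K : finFieldType) (n : nat) (C1 C2 : {set 'rV[K]_n}) : Prop :=
  exists sigma : 'S_n, forall c : 'rV[K]_n, (c \in C1) = (col_perm sigma c \in C2).

(* Main.v *)
Require Import Defs.
From mathcomp Require Import all_boot all_order all_algebra all_fingroup all_field.
From mathcomp Require Import all_solvable zify.
Set Implicit Arguments. Unset Strict Implicit. Unset Printing Implicit Defensive.
Import GRing.Theory.
Local Open Scope ring_scope.

Lemma frobK (K : finFieldType) (F : fieldExtType K) (x y : F) :
  (x + y) ^+ #|K| = x ^+ #|K| + y ^+ #|K|.
Proof.
apply: exprDn_pchar.
have [p pr_p pK] := finPcharP K.
have pF : p \in [pchar F] by rewrite (pchar_lalg F).
have ab := fin_ring_pchar_abelem pK.
have pg := abelem_pgroup ab.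
move: pg; rewrite /pgroup cardsT => pg.
apply: sub_in_pnat pg => r _; rewrite inE => /eqP ->; exact: pF.
Qed.

Lemma alg_expK (K : finFieldType) (F : fieldExtType K) (c : K) :
  (c%:A : F) ^+ #|K| = c%:A.
Proof. by rewrite -(rmorphXn (in_alg F)) /= expf_card. Qed.

Theorem lemma1 (K : finFieldType) (F : fieldExtType K) (n : nat)
    (alpha : 'I_n -> F) (alpha_inj : injective alpha)
    (alpha_nz : forall k, alpha k != 0) :
  codes_equiv (goppa_code alpha 'X^#|K|) (goppa_code alpha 'X^(#|K|.-1)).
Proof.
exists 1%g; move=> c; rewrite col_perm1 !inE !size_polyXn /=.
have q1 : (1 < #|K|)%N := finNzRing_gt1 K.
set q := #|K| in q1 *.
have qE : q = q.-2.+2 by move: q1; case: (q) => [|[|?]].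
have qS : q = q.-1.+1 by rewrite qE.
have aq k : alpha k ^+ q = alpha k * alpha k ^+ q.-1 by rewrite {1}qS exprS.
have hX m s : \sum_(k < n) ((c 0 k)%:A * alpha k ^+ s / 'X^m.[alpha k]) =
   \sum_(k < n) ((c 0 k)%:A * alpha k ^+ s / alpha k ^+ m).
  by apply: eq_bigr => k _; rewrite hornerXn.
pose T s := \sum_(k < n) ((c 0 k)%:A * alpha k ^+ s / alpha k ^+ q).
have shift s : \sum_(k < n) ((c 0 k)%:A * alpha k ^+ s / alpha k ^+ q.-1) = T s.+1.
  apply: eq_bigr => k _; rewrite /T.
  have a0 := alpha_nz k.
  rewrite aq exprS.
  rewrite invfM -!mulrA; congr (_ * _).
  by rewrite mulrCA [alpha k * (_ * _)]mulrA mulfV // mul1r.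
have frob : T 0 = T q.-1 ^+ q.
  have z0 : (0 : F) ^+ q = 0 by rewrite qE expr0n.
  rewrite /T (big_morph (fun x : F => x ^+ q) (@frobK K F) z0).
  apply: eq_bigr => k _.
  have a0 := alpha_nz k.
  rewrite expr0 mulr1 -mulrA.
  have -> : alpha k ^+ q.-1 / alpha k ^+ q = (alpha k)^-1.
    rewrite aq.
    by rewrite invfM mulrCA mulfV ?expf_neq0 // mulr1.
  by rewrite exprMn alg_expK exprVn.
apply/forallP/forallP.
- move=> H s; rewrite hX shift.
  have hs : (s.+1 < q)%N by have := ltn_ord s; lia.
  by move: (H (Ordinal hs)); rewrite hX.
- move=> H s.
  case: s => [[|s] hs] /=.
  + rewrite hX -/(T 0) frob.
    have hs' : (q.-2 < q.-1)%N by lia.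
    move: (H (Ordinal hs')); rewrite hX shift /= (_ : q.-2.+1 = q.-1); last by lia.
    by move/eqP => ->; rewrite expr0n /= -[q]prednK ?(ltnW q1).
  + have hs' : (s < q.-1)%N.
      by lia.
    by move: (H (Ordinal hs')); rewrite hX hX shift.
Qed.
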